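(* Consider the system $x(k+1)=Ax(k)+Bu(k)$ with $A\in\mathbb{R}^{n\times n}$, $B\in\mathbb{R}^{n\times m}$ and $(A,B)$ controllable. Let $\{u_i^{[0,T_i-1]},x_i^{[0,T_i-1]}\}_{i=1}^p$ be $p$ input-state trajectories of this system (i.e. $x_i(k+1)=Ax_i(k)+Bu_i(k)$). Let $L\ge1$ and let $\alpha_1,\dots,\alpha_p$ be any nonzero real weights (used in all matrices below). 1) If $T_1=\dots=T_p=T_0$ and $\{u_i^{[0,T_0-1]}\}_{i=1}^p$ are CCPE of order $L+n$, then $\operatorname{rank}\begin{bmatrix}H_1^{cum}(\{x_i^{[0,T_0-L]}\}_{i=1}^p)\\ H_L^{cum}(\{u_i^{[0,T_0-1]}\}_{i=1}^p)\end{bmatrix}=n+mL$. 2) If $\{u_i^{[0,T_i-1]}\}_{i=1}^p$ are MCPE of order $L+n$, then $\operatorname{rank}\begin{bmatrix}H_1^{mos}(\{x_i^{[0,T_i-L]}\}_{i=1}^p)\\ H_L^{mos}(\{u_i^{[0,T_i-1]}\}_{i=1}^p)\end{bmatrix}=n+mL$. 3) If $T_1=\dots=T_{\bar p}=T_0$ and $\{u_i^{[0,T_i-1]}\}_{i=1}^p$ are HCPE of order $L+n$ (cumulative part $u_1,\dots,u_{\bar p}$, mosaic part $u_{\bar p+1},\dots,u_p$), then $\operatorname{rank}\begin{bmatrix}H_1^{hyb}(\{x_i^{[0,T_i-L]}\}_{i=1}^p)\\ H_L^{hyb}(\{u_i^{[0,T_i-1]}\}_{i=1}^p)\end{bmat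rix}=n+mL$.
   Context: For a sequence $z^{[a,b]}=(z(a),\dots,z(b))$ with $z(k)\in\mathbb{R}^q$ and $L\le b-a+1$, the block Hankel matrix $H_L(z^{[a,b]})\in\mathbb{R}^{qL\times(b-a-L+2)}$ has $(r,c)$ block entry $z(a+r+c)$. With nonzero weights $\alpha_i$: $H_L^{mos}(\{z_i^{[a,b_i]}\}_{i=1}^p)=[\alpha_1H_L(z_1^{[a,b_1]})\ \cdots\ \alpha_pH_L(z_p^{[a,b_p]})]$; for equal-length sequences $H_L^{cum}(\{z_i^{[a,b]}\}_{i=1}^p)=\sum_i\alpha_iH_L(z_i^{[a,b]})$; and $H_L^{hyb}(\{z_i\}_{i=1}^p)=[H_L^{cum}(\{z_i\}_{i=1}^{\bar p})\ \ H_L^{mos}(\{z_i\}_{i=\bar p+1}^p)]$ where $z_1,\dots,z_{\bar p}$ have equal lengths. Signals $u_i\in\mathbb{R}^m$ are MCPE (resp. CCPE, HCPE) of order $K$ if $H_K^{mos}$ (resp. $H_K^{cum}$, $H_K^{hyb}$) of the sequences has full row rank $mK$ for every choice of nonzero weights $\alpha_i$. *)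

(* Defs.v *)
From HB Require Import structures.
From mathcomp Require Import all_boot all_order all_algebra.
From mathcomp Require Export reals.
Set Implicit Arguments. Unset Strict Implicit. Unset Printing Implicit Defensive.
Import Order.TTheory GRing.Theory Num.Theory.
Local Open Scope ring_scope.

Lemma ltn_mod_ord (K q : nat) (i : 'I_(K * q)) : (i %% q < q)%N.
Proof.
case: q i => [|q] i; last by rewrite ltn_mod.
by case: i => /= i; rewrite muln0.
Qed.

Definition ord_mod (K q : nat) (i : 'I_(K * q)) : 'I_q := Ordinal (ltn_mod_ord i).

Section Defs.
Variable R : realType.

(* Block Hankel matrix of depth K with N columns of a sequence z with values
   in R^q : size (K q) x N, (r,c) block entry z(r + c) (row index i = r*q + j is
   the j-th coordinate of block r).  For a sequence z^{[0,T-1]} of length T the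
   paper's H_K(z^{[0,T-1]}) is  hankel K (T - K + 1) z  (T - K + 1 = number of
   columns b - a - K + 2 with a = 0, b = T - 1). *)
Definition hankel (q K N : nat) (z : nat -> 'cV[R]_q) : 'M[R]_(K * q, N) :=
  \matrix_(i, c) z (i %/ q + c)%N (ord_mod i) 0.

Definition Hmos (q K p : nat) (alpha : 'I_p -> R) (N : 'I_p -> nat)
  (z : 'I_p -> nat -> 'cV[R]_q) : 'M[R]_(K * q, \sum_(i < p) N i) :=
  mxrow (fun i => alpha i *: hankel K (N i) (z i)).

Definition Hcum (q K p : nat) (alpha : 'I_p -> R) (N0 : nat)
  (z : 'I_p -> nat -> 'cV[R]_q) : 'M[R]_(K * q, N0) :=
  \sum_(i < p) alpha i *: hankel K N0 (z i).

(* Hybrid Hankel matrix: the first pb sequences (indices lshift) form the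
   cumulative part (common column count N0), the last pm ones (indices rshift)
   the mosaic part (column counts N). *)
Definition Hhyb (q K pb pm : nat) (alpha : 'I_(pb + pm) -> R) (N0 : nat)
  (N : 'I_(pb + pm) -> nat) (z : 'I_(pb + pm) -> nat -> 'cV[R]_q) :=
  row_mx (Hcum K (fun i => alpha (lshift pm i)) N0 (fun i => z (lshift pm i)))
         (Hmos K (fun i => alpha (rshift pb i)) (fun i => N (rshift pb i))
                 (fun i => z (rshift pb i))).

Definition MCPE (q p : nat) (T : 'I_p -> nat) (u : 'I_p -> nat -> 'cV[R]_q) (K : nat) :=
  forall alpha : 'I_p -> R, (forall i, alpha i != 0) ->
    row_free (Hmos K alpha (fun i => T i - K + 1)%N u).

Definition CCPE (q p : nat) (T0 : nat) (u : 'I_p -> nat -> 'cV[R]_q) (K : nat) :=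
  forall alpha : 'I_p -> R, (forall i, alpha i != 0) ->
    row_free (Hcum K alpha (T0 - K + 1) u).

Definition HCPE (q pb pm : nat) (T0 : nat) (T : 'I_(pb + pm) -> nat)
  (u : 'I_(pb + pm) -> nat -> 'cV[R]_q) (K : nat) :=
  forall alpha : 'I_(pb + pm) -> R, (forall i, alpha i != 0) ->
    row_free (Hhyb K alpha (T0 - K + 1) (fun i => T i - K + 1)%N u).

Definition ctrb_mx (n m : nat) (A : 'M[R]_n) (B : 'M[R]_(n, m)) : 'M[R]_(n, n * m) :=
  \matrix_(i, j) (A ^+ (j %/ m) *m B) i (ord_mod j).

Definition controllable (n m : nat) (A : 'M[R]_n) (B : 'M[R]_(n, m)) :=
  \rank (ctrb_mx A B) = n.

Definition is_traj (n m : nat) (A : 'M[R]_n) (B : 'M[R]_(n, m)) (T : nat)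
  (u : nat -> 'cV[R]_m) (x : nat -> 'cV[R]_n) :=
  forall k, (k.+1 < T)%N -> x k.+1 = A *m x k + B *m u k.

End Defs.

(* Main.v *)
Require Import Defs.
From HB Require Import structures.
From mathcomp Require Import all_boot all_order all_algebra.
From mathcomp Require Import reals.
From mathcomp Require Import zify.
Set Implicit Arguments. Unset Strict Implicit. Unset Printing Implicit Defensive.
Import Order.TTheory GRing.Theory Num.Theory.
Local Open Scope ring_scope.


Lemma flat_lt (K q : nat) (k : 'I_K) (j : 'I_q) : (k * q + j < K * q)%N.
Proof.
case: k j => k hk [j hj] /=.
have : (k.+1 * q <= K * q)%N by rewrite leq_mul2r hk orbT.
rewrite mulSn; lia.
Qed.

Definition flat (K q : nat) (k : 'I_K) (j : 'I_q) : 'I_(K * q) := Ordinal (flat_lt k j).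

Lemma flat_div (K q : nat) (k : 'I_K) (j : 'I_q) : ((flat k j) %/ q)%N = k.
Proof.
case: j => j hj /=; have q0 : (0 < q)%N by case: q hj {k} => //.
by rewrite divnMDl // divn_small // addn0.
Qed.

Lemma flat_mod (K q : nat) (k : 'I_K) (j : 'I_q) : ord_mod (flat k j) = j.
Proof.
apply: val_inj => /=; case: j => j hj /=.
by rewrite modnMDl modn_small.
Qed.

Lemma flat_inj (K q : nat) : injective (fun p : 'I_K * 'I_q => flat p.1 p.2).
Proof.
move=> [k1 j1] [k2 j2] /= h.
have e1 := flat_div k1 j1; have e2 := flat_mod k1 j1.
rewrite h flat_div in e1; rewrite h flat_mod in e2.
by rewrite e2; congr pair; apply: val_inj.
Qed.

Lemma sum_flat (V : nmodType) (K q : nat) (G : 'I_(K * q) -> V) :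
  \sum_(i < K * q) G i = \sum_(k < K) \sum_(j < q) G (flat k j).
Proof.
rewrite pair_big /=.
have hb : bijective (fun p : 'I_K * 'I_q => flat p.1 p.2).
  by apply: inj_card_bij; [exact: flat_inj | rewrite card_prod !card_ord].
by rewrite (reindex _ (onW_bij _ hb)).
Qed.


Section Hank.
Variable R : realType.

Definition blk (K q : nat) (v : 'rV[R]_(K * q)) (r : nat) : 'rV[R]_q :=
  \row_j \sum_(k < K | val k == r) v 0 (flat k j).

Lemma blk_ord (K q : nat) (v : 'rV[R]_(K * q)) (k : 'I_K) :
  blk v k = \row_j v 0 (flat k j).
Proof.
apply/rowP => j; rewrite !mxE.
rewrite (big_pred1 k) // => i /=; exact: inj_eq val_inj.
Qed.

Lemma mul_hankel (K q N : nat) (v : 'rV[R]_(K * q)) (z : nat -> 'cV[R]_q) (c : 'I_N) :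
  (v *m hankel K N z) 0 c = (\sum_(k < K) blk v k *m z (k + c)%N) 0 0.
Proof.
rewrite mxE sum_flat summxE; apply: eq_bigr => k _.
rewrite blk_ord mxE; apply: eq_bigr => j _.
by rewrite !mxE flat_div flat_mod.
Qed.

Definition vecr (K q : nat) (y : nat -> 'rV[R]_q) : 'rV[R]_(K * q) :=
  \row_i y (i %/ q)%N 0 (ord_mod i).

Lemma blk_vecr (K q : nat) (y : nat -> 'rV[R]_q) (k : 'I_K) : blk (vecr K y) k = y k.
Proof.
by apply/rowP => j; rewrite blk_ord !mxE flat_div flat_mod.
Qed.

Lemma mul_hank2 (n m L N : nat) (w : 'rV[R]_(1 * n + L * m)) (X : nat -> 'cV[R]_n)
   (U : nat -> 'cV[R]_m) (c : 'I_N) :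
  (w *m col_mx (hankel 1 N X) (hankel L N U)) 0 c =
  (blk (lsubmx w) 0 *m X c + \sum_(r < L) blk (rsubmx w) r *m U (r + c)%N) 0 0.
Proof.
rewrite -{1}(hsubmxK w) mul_row_col [LHS]mxE !mul_hankel big_ord1 [RHS]mxE.
by [].
Qed.

End Hank.


Section Core.
Variables (R : realType) (n m L : nat) (A : 'M[R]_n) (B : 'M[R]_(n, m)).

Lemma CH_poly : exists P : {poly R},
  P`_n = 1 /\ \sum_(s < n.+1) P`_s *: A ^+ s = 0.
Proof.
case: n A => [|n'] A'.
  exists 1; split; first by rewrite coefC.
  by apply/matrixP => i; case: i.
exists (char_poly A'); split.
  by have /monicP := char_poly_monic A'; rewrite /lead_coef size_char_poly.
have := Cayley_Hamilton A'.
have mon := char_poly_monic A'.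
rewrite /horner_mx /horner_morph (@horner_coef_wide _ (size (char_poly A'))); last first.
  rewrite size_map_poly_id0 // ?leqnn //; move/monicP: mon => ->.
  by rewrite -[_%:M]/(1 : 'M_n'.+1) oner_eq0.
rewrite size_char_poly => h; rewrite -[X in _ = X]h; apply: eq_bigr => i _.
by rewrite coef_map /= -mul_scalar_mx.
Qed.


Hypothesis hAB : controllable A B.
Variables (C : Type) (xw : C -> nat -> 'cV[R]_n) (uw : C -> nat -> 'cV[R]_m)
  (xi : 'rV[R]_n) (eta : nat -> 'rV[R]_m).
Hypothesis Htraj : forall c s, (s < n)%N -> xw c s.+1 = A *m xw c s + B *m uw c s.
Hypothesis H1 : forall c s, (s <= n)%N ->
  xi *m xw c s + \sum_(r < L) eta r *m uw c (r + s)%N = 0.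
Hypothesis HPE : forall y : nat -> 'rV[R]_m,
  (forall c, \sum_(k < L + n) y k *m uw c k = 0) -> forall k, (k < L + n)%N -> y k = 0.

Lemma state_exp c s : (s <= n)%N ->
  xw c s = A ^+ s *m xw c 0 + \sum_(t < s) A ^+ (s - t.+1) *m B *m uw c t.
Proof.
elim: s => [|s IH] hs; first by rewrite expr0 mul1mx big_ord0 addr0.
have eA k : A *m A ^+ k = A ^+ k.+1 by rewrite exprS.
rewrite Htraj // (IH (ltnW hs)) big_ord_recr.
have -> : (s.+1 - (@ord_max s).+1 = 0)%N by exact: subnn.
rewrite expr0 mul1mx mulmxDr mulmxA eA mulmx_sumr addrA; congr (_ + _ + _).
apply: eq_bigr => t _; rewrite !mulmxA eA.
congr (A ^+ _ *m _ *m _); rewrite subnSK //.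
Qed.


Definition yv (s k : nat) : 'rV[R]_m :=
  if (k < s)%N then xi *m A ^+ (s - k.+1) *m B
  else if (k < s + L)%N then eta (k - s) else 0.

Lemma yv_eq c s : (s <= n)%N ->
  xi *m A ^+ s *m xw c 0 + \sum_(k < L + n) yv s k *m uw c k = 0.
Proof.
move=> hs; rewrite -[RHS](H1 c hs) (state_exp c hs) mulmxDr mulmxA -addrA; congr (_ + _).
rewrite -(big_mkord xpredT (fun k => yv s k *m uw c k)) (big_cat_nat (n := s)) //; last by lia.
rewrite (big_cat_nat (n := s + L) (m := s)) ?leq_addr //; last by lia.
rewrite [X in X = _]/=.
rewrite [X in _ + (_ + X)]big1_seq ?addr0; last first.
  move=> k /andP [_]; rewrite mem_index_iota => /andP [h1 h2].
  rewrite /yv; have -> : (k < s)%N = false by apply/negbTE; lia.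
  have -> : (k < s + L)%N = false by apply/negbTE; lia.
  by rewrite mul0mx.
congr (_ + _).
  rewrite big_mkord mulmx_sumr; apply: eq_bigr => t _.
  by rewrite /yv ltn_ord !mulmxA.
rewrite (big_addn 0 _ s) addKn big_mkord; apply: eq_bigr => r _.
have hr := ltn_ord r.
rewrite /yv; have -> : (r + s < s)%N = false by apply/negbTE; lia.
have -> : (r + s < s + L)%N = true by apply/idP; lia.
by rewrite addnK.
Qed.


Definition ev (t : nat) : 'rV[R]_m :=
  if (t < n)%N then xi *m A ^+ (n - t.+1) *m B
  else if (t < n + L)%N then eta (t - n) else 0.

Lemma yv_ev s k : (s <= n)%N -> yv s k = ev (k + n - s).
Proof.
move=> hs; rewrite /yv /ev; case: (ltnP k s) => h1.
  have -> : (k + n - s < n)%N = true by apply/idP; lia.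
  by have -> : (s - k.+1 = n - (k + n - s).+1)%N by lia.
have -> : (k + n - s < n)%N = false by apply/negbTE; lia.
case: (ltnP k (s + L)) => h2.
  have -> : (k + n - s < n + L)%N = true by apply/idP; lia.
  by have -> : (k - s = k + n - s - n)%N by lia.
by have -> : (k + n - s < n + L)%N = false by apply/negbTE; lia.
Qed.

Lemma ev_zero t : ev t = 0.
Proof.
have [P [Pn PA]] := CH_poly.
pose Y k := \sum_(s < n.+1) P`_s *: yv s k.
have HY : forall k, (k < L + n)%N -> Y k = 0.
  apply: HPE => c.
  have e1 : forall s : 'I_n.+1, \sum_(k < L + n) yv s k *m uw c k =
      - (xi *m A ^+ s *m xw c 0).
    move=> s; apply/eqP; rewrite -addr_eq0 addrC; apply/eqP.
    by apply: yv_eq; rewrite -ltnS.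
  rewrite /Y.
  under eq_bigr do rewrite mulmx_suml.
  rewrite exchange_big /=.
  under eq_bigr do (under eq_bigr do rewrite -scalemxAl; rewrite -scaler_sumr e1).
have -> : \sum_(i < n.+1) P`_i *: - (xi *m A ^+ i *m xw c 0) =
      - (xi *m (\sum_(i < n.+1) P`_i *: A ^+ i) *m xw c 0).
    rewrite mulmx_sumr mulmx_suml -sumrN; apply: eq_bigr => s _.
    by rewrite scalerN -scalemxAr -scalemxAl.
  by rewrite PA mulmx0 mul0mx oppr0.
have key : forall d t, (n + L - d <= t)%N -> ev t = 0.
  elim=> [|d IH] t' ht.
    rewrite /ev; have -> : (t' < n)%N = false by apply/negbTE; lia.
    by have -> : (t' < n + L)%N = false by apply/negbTE; lia.
  case: (leqP (n + L - d) t') => h; first exact: IH.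
  have tl : (t' < L + n)%N by lia.
  have := HY t' tl; rewrite /Y big_ord_recr /= Pn scale1r yv_ev // addnK.
  rewrite big1 ?add0r // => s _; rewrite yv_ev; last by apply: ltnW.
  by rewrite IH ?scaler0 //; have := ltn_ord s; lia.
by apply: (key (n + L)); lia.
Qed.


Lemma core_main : xi = 0 /\ forall r, (r < L)%N -> eta r = 0.
Proof.
split; last first.
  move=> r hr; have := ev_zero (r + n); rewrite /ev.
  have -> : (r + n < n)%N = false by apply/negbTE; lia.
  have -> : (r + n < n + L)%N = true by apply/idP; lia.
  by rewrite addnK.
have hB : forall k, (k < n)%N -> xi *m A ^+ k *m B = 0.
  move=> k hk; have := ev_zero (n - k.+1); rewrite /ev.
  have -> : (n - k.+1 < n)%N = true by apply/idP; lia.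
  by have -> : (n - (n - k.+1).+1 = k)%N by lia.
have hf : row_free (ctrb_mx A B) by rewrite /row_free hAB.
apply/eqP; rewrite -(mulmx_free_eq0 _ hf); apply/eqP/rowP => j.
have hm : (0 < m)%N by case: m j {hB hf} => [|//] [j]; rewrite muln0.
have hj : (j %/ m < n)%N by rewrite ltn_divLR.
transitivity ((xi *m (A ^+ (j %/ m) *m B)) 0 (ord_mod j)).
  by rewrite !mxE; apply: eq_bigr => i _; rewrite !mxE.
by rewrite mulmxA hB // !mxE.
Qed.

End Core.





Section App.
Variables (R : realType) (n m L : nat) (A : 'M[R]_n) (B : 'M[R]_(n, m)).

Definition zsum (q p : nat) (al : 'I_p -> R) (z : 'I_p -> nat -> 'cV[R]_q) (t : nat) : 'cV[R]_q :=
  \sum_i al i *: z i t.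

Lemma Hcum_hankel (q K p N : nat) (al : 'I_p -> R) (z : 'I_p -> nat -> 'cV[R]_q) :
  Hcum K al N z = hankel K N (zsum al z).
Proof.
apply/matrixP => i j; rewrite /Hcum summxE !mxE summxE; apply: eq_bigr => k _.
by rewrite !mxE.
Qed.

Lemma zsum_traj (p T : nat) (al : 'I_p -> R) u x :
  (forall i, is_traj A B T (u i) (x i)) -> is_traj A B T (zsum al u) (zsum al x).
Proof.
move=> h k hk; rewrite /zsum mulmx_sumr mulmx_sumr -big_split; apply: eq_bigr => i _.
by rewrite h // scalerDr -!scalemxAr.
Qed.

Lemma Hmos_mul (q K p r : nat) (al : 'I_p -> R) N (z : 'I_p -> nat -> 'cV[R]_q)
   (w : 'M[R]_(r, K * q)) :
  w *m Hmos K al N z = \mxrow_i (al i *: (w *m hankel K (N i) (z i))).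
Proof.
rewrite /Hmos mul_mxrow; apply/mxrowP => i; rewrite !mxrowK.
by rewrite scalemxAr.
Qed.


Definition xiw (w : 'rV[R]_(1 * n + L * m)) : 'rV[R]_n := blk (lsubmx w) 0.
Definition etaw (w : 'rV[R]_(1 * n + L * m)) : nat -> 'rV[R]_m := blk (rsubmx w).

Lemma mx11_eq0 (M : 'M[R]_(1, 1)) : M 0 0 = 0 -> M = 0.
Proof. by move=> h; apply/matrixP => i j; rewrite !ord1 h mxE. Qed.

Lemma kern1 (N : nat) (X : nat -> 'cV[R]_n) (U : nat -> 'cV[R]_m) w :
  w *m col_mx (hankel 1 N X) (hankel L N U) = 0 ->
  forall c, (c < N)%N -> xiw w *m X c + \sum_(r < L) etaw w r *m U (r + c)%N = 0.
Proof.
move=> h c hc; apply: mx11_eq0.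
by rewrite /xiw /etaw -(mul_hank2 w X U (Ordinal hc)) h mxE.
Qed.

Lemma blk_zero (K q : nat) (v : 'rV[R]_(K * q)) :
  (forall k, (k < K)%N -> blk v k = 0) -> v = 0.
Proof.
move=> h; apply/rowP => i.
have hq : (0 < q)%N by case: q v h i => [|//] v h [i]; rewrite muln0.
have hk : (i %/ q < K)%N by rewrite ltn_divLR.
have e : i = flat (Ordinal hk) (ord_mod i).
  by apply: val_inj; rewrite /= {1}(divn_eq i q).
have := h _ hk; rewrite -[(i %/ q)%N]/(nat_of_ord (Ordinal hk)) blk_ord.
by move/rowP/(_ (ord_mod i)); rewrite !mxE -e.
Qed.

Lemma w_zero w : xiw w = 0 -> (forall r, (r < L)%N -> etaw w r = 0) -> w = 0.
Proof.
move=> h1 h2; rewrite -(hsubmxK w).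
have -> : lsubmx w = 0.
  by apply: blk_zero => k; rewrite ltnS leqn0 => /eqP ->.
by rewrite (blk_zero h2) row_mx0.
Qed.

Lemma pe_hank (N : nat) (U : nat -> 'cV[R]_m) (y : nat -> 'rV[R]_m) :
  (forall c, (c < N)%N -> \sum_(k < L + n) y k *m U (k + c)%N = 0) ->
  vecr (L + n) y *m hankel (L + n) N U = 0.
Proof.
move=> h; apply/rowP => c; rewrite mul_hankel.
under eq_bigr do rewrite blk_vecr.
by rewrite (h c (ltn_ord c)) !mxE.
Qed.

Lemma pe_free (N : nat) (M : 'M[R]_((L + n) * m, N)) (y : nat -> 'rV[R]_m) :
  row_free M -> vecr (L + n) y *m M = 0 -> forall k, (k < L + n)%N -> y k = 0.
Proof.
move=> hf h k hk; have /eqP := h; rewrite (mulmx_free_eq0 _ hf) => /eqP h0.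
rewrite -(blk_vecr y (Ordinal hk)) h0; apply/rowP => j; rewrite !mxE big1 // => i _; by rewrite mxE.
Qed.

Lemma rank_from_ker (p q : nat) (M : 'M[R]_(p, q)) :
  (forall w : 'rV_p, w *m M = 0 -> w = 0) -> \rank M = p.
Proof.
move=> hw; apply/eqP; rewrite -/(row_free M) -kermx_eq0; apply/eqP/row_matrixP => i.
by rewrite row0; apply: hw; apply/sub_kermxP; exact: row_sub.
Qed.

Hypothesis hL : (1 <= L)%N.

Lemma win_traj (X : nat -> 'cV[R]_n) (U : nat -> 'cV[R]_m) (T : nat) :
  (L + n <= T)%N -> is_traj A B T U X -> forall c s, (c < T - (L + n) + 1)%N -> (s < n)%N ->
  X (c + s.+1)%N = A *m X (c + s)%N + B *m U (s + c)%N.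
Proof.
move=> hT tr c s hc hs; rewrite addnS tr ?(addnC s) //; lia.
Qed.

Lemma win_H1 w (X : nat -> 'cV[R]_n) (U : nat -> 'cV[R]_m) (T : nat) :
  (L + n <= T)%N -> w *m col_mx (hankel 1 (T - L + 1) X) (hankel L (T - L + 1) U) = 0 ->
  forall c s, (c < T - (L + n) + 1)%N -> (s <= n)%N ->
  xiw w *m X (c + s)%N + \sum_(r < L) etaw w r *m U (r + s + c)%N = 0.
Proof.
move=> hT hk c s hc hs; rewrite -[RHS](kern1 hk (c := c + s)); last by lia.
by congr (_ + _); apply: eq_bigr => r _; rewrite -addnA (addnC s).
Qed.

End App.

Section App2.
Variables (R : realType) (n m L : nat).

Lemma kern_mos (p : nat) (al : 'I_p -> R) (N : 'I_p -> nat) (x : 'I_p -> nat -> 'cV[R]_n)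
   (u : 'I_p -> nat -> 'cV[R]_m) (w : 'rV[R]_(1 * n + L * m)) :
  (forall i, al i != 0) -> w *m col_mx (Hmos 1 al N x) (Hmos L al N u) = 0 ->
  forall i, w *m col_mx (hankel 1 (N i) (x i)) (hankel L (N i) (u i)) = 0.
Proof.
move=> ha h i; move: h; rewrite -{1}(hsubmxK w) mul_row_col !Hmos_mul -mxrowD.
move=> /(congr1 (fun M => submxrow M i)); rewrite mxrowK submxrow0 -scalerDr.
rewrite -mul_row_col hsubmxK => /eqP; rewrite scaler_eq0 (negbTE (ha i)) /=.
by move/eqP.
Qed.

Lemma kern_hyb (pb pm : nat) (al : 'I_(pb + pm) -> R) (N0 : nat) (N : 'I_(pb + pm) -> nat)
   (x : 'I_(pb + pm) -> nat -> 'cV[R]_n) (u : 'I_(pb + pm) -> nat -> 'cV[R]_m)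
   (w : 'rV[R]_(1 * n + L * m)) :
  w *m col_mx (Hhyb 1 al N0 N x) (Hhyb L al N0 N u) = 0 ->
  w *m col_mx (Hcum 1 (fun i => al (lshift pm i)) N0 (fun i => x (lshift pm i)))
              (Hcum L (fun i => al (lshift pm i)) N0 (fun i => u (lshift pm i))) = 0 /\
  w *m col_mx (Hmos 1 (fun i => al (rshift pb i)) (fun i => N (rshift pb i)) (fun i => x (rshift pb i)))
              (Hmos L (fun i => al (rshift pb i)) (fun i => N (rshift pb i)) (fun i => u (rshift pb i))) = 0.
Proof.
rewrite /Hhyb -[col_mx (row_mx _ _) (row_mx _ _)]/(block_mx _ _ _ _) block_mxEh mul_mx_row.
by move=> /eqP; rewrite row_mx_eq0 => /andP [/eqP -> /eqP ->].
Qed.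

End App2.




Lemma part1 (R : realType) (n m : nat) (A : 'M[R]_n) (B : 'M[R]_(n, m))
  (hAB : controllable A B) (L : nat) (hL : (1 <= L)%N) :
  (forall (p T0 : nat) (u : 'I_p -> nat -> 'cV[R]_m) (x : 'I_p -> nat -> 'cV[R]_n),
     (forall i, is_traj A B T0 (u i) (x i)) ->
     (L + n <= T0)%N ->
     CCPE T0 u (L + n) ->
     forall alpha : 'I_p -> R, (forall i, alpha i != 0) ->
       \rank (col_mx (Hcum 1 alpha (T0 - L + 1) x) (Hcum L alpha (T0 - L + 1) u))
         = (n + m * L)%N).
Proof.
move=> p T0 u x tr hT pe al ha.
have -> : (n + m * L = 1 * n + L * m)%N by rewrite mul1n mulnC.
apply: rank_from_ker => w hw.
rewrite !Hcum_hankel in hw.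
have trX := zsum_traj al tr.
suff [h1 h2] : xiw w = 0 /\ (forall r, (r < L)%N -> etaw w r = 0) by apply: w_zero.
apply: (core_main hAB (C := 'I_(T0 - (L + n) + 1))
  (xw := fun c s => zsum al x (c + s)%N) (uw := fun c t => zsum al u (t + c)%N)
  (xi := xiw w) (eta := etaw w)).
- by move=> c s hs; exact: (win_traj hL hT trX (ltn_ord c) hs).
- by move=> c s hs; exact: (win_H1 hL hT hw (ltn_ord c) hs).
- move=> y hy; apply: (pe_free (M := hankel (L + n) (T0 - (L + n) + 1) (zsum al u))).
    by have := pe al ha; rewrite Hcum_hankel.
  by apply: pe_hank => c hc; exact: (hy (Ordinal hc)).
Qed.

Lemma part2 (R : realType) (n m : nat) (A : 'M[R]_n) (B : 'M[R]_(n, m))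
  (hAB : controllable A B) (L : nat) (hL : (1 <= L)%N) :
  (forall (p : nat) (T : 'I_p -> nat) (u : 'I_p -> nat -> 'cV[R]_m)
          (x : 'I_p -> nat -> 'cV[R]_n),
     (forall i, is_traj A B (T i) (u i) (x i)) ->
     (forall i, L + n <= T i)%N ->
     MCPE T u (L + n) ->
     forall alpha : 'I_p -> R, (forall i, alpha i != 0) ->
       \rank (col_mx (Hmos 1 alpha (fun i => T i - L + 1)%N x) (Hmos L alpha (fun i => T i - L + 1)%N u))
         = (n + m * L)%N).
Proof.
move=> p T u x tr hT pe al ha.
have -> : (n + m * L = 1 * n + L * m)%N by rewrite mul1n mulnC.
apply: rank_from_ker => w hw.
have hw' := kern_mos ha hw.
suff [h1 h2] : xiw w = 0 /\ (forall r, (r < L)%N -> etaw w r = 0) by apply: w_zero.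
apply: (core_main hAB (C := {i : 'I_p & 'I_(T i - (L + n) + 1)})
  (xw := fun c s => x (tag c) (tagged c + s)%N) (uw := fun c t => u (tag c) (t + tagged c)%N)
  (xi := xiw w) (eta := etaw w)).
- by move=> [i c] s hs; exact: (win_traj hL (hT i) (tr i) (ltn_ord c) hs).
- by move=> [i c] s hs; exact: (win_H1 hL (hT i) (hw' i) (ltn_ord c) hs).
- move=> y hy; apply: (pe_free (pe al ha)).
  rewrite Hmos_mul; apply/mxrowP => i; rewrite mxrowK submxrow0.
  rewrite (pe_hank (U := u i)) ?scaler0 // => c hc.
  exact: (hy (existT _ i (Ordinal hc))).
Qed.

Lemma part3 (R : realType) (n m : nat) (A : 'M[R]_n) (B : 'M[R]_(n, m))
  (hAB : controllable A B) (L : nat) (hL : (1 <= L)%N) :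
  (forall (pb pm T0 : nat) (T : 'I_(pb + pm) -> nat)
          (u : 'I_(pb + pm) -> nat -> 'cV[R]_m) (x : 'I_(pb + pm) -> nat -> 'cV[R]_n),
     (forall i, is_traj A B (T i) (u i) (x i)) ->
     (forall i : 'I_pb, T (lshift pm i) = T0) ->
     (forall i, L + n <= T i)%N ->
     HCPE T0 T u (L + n) ->
     forall alpha : 'I_(pb + pm) -> R, (forall i, alpha i != 0) ->
       \rank (col_mx (Hhyb 1 alpha (T0 - L + 1) (fun i => T i - L + 1)%N x)
                     (Hhyb L alpha (T0 - L + 1) (fun i => T i - L + 1)%N u))
         = (n + m * L)%N).
Proof.
move=> pb pm T0 T u x tr hT0 hT pe al ha.
have -> : (n + m * L = 1 * n + L * m)%N by rewrite mul1n mulnC.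
apply: rank_from_ker => w hw.
have [hwc hwm] := kern_hyb hw.
rewrite !Hcum_hankel in hwc.
have hwm' := kern_mos (fun i => ha (rshift pb i)) hwm.
set alc := fun i => al (lshift pm i).
set Xc := zsum alc (fun i => x (lshift pm i)).
set Uc := zsum alc (fun i => u (lshift pm i)).
have trc : is_traj A B T0 Uc Xc.
  by apply: zsum_traj => i; rewrite -(hT0 i); exact: tr.
have degen : (T0 < L + n)%N -> (forall t, Xc t = 0) /\ (forall t, Uc t = 0).
  move=> hT0'; have hF : forall i : 'I_pb, False.
    by move=> i; have := hT (lshift pm i); rewrite hT0; lia.
  by split=> t; rewrite /Xc /Uc /zsum big1 // => i; case: (hF i).
have trc' : forall (c : 'I_(T0 - (L + n) + 1)) s, (s < n)%N ->
    Xc (c + s.+1)%N = A *m Xc (c + s)%N + B *m Uc (s + c)%N.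
  move=> c s hs; have [hT0'|/degen [X0 U0]] := leqP (L + n) T0.
    exact: (win_traj hL hT0' trc (ltn_ord c) hs).
  by rewrite !X0 U0 !mulmx0 addr0.
have H1c : forall (c : 'I_(T0 - (L + n) + 1)) s, (s <= n)%N ->
    xiw w *m Xc (c + s)%N + \sum_(r < L) etaw w r *m Uc (r + s + c)%N = 0.
  move=> c s hs; have [hT0'|/degen [X0 U0]] := leqP (L + n) T0.
    exact: (win_H1 hL hT0' hwc (ltn_ord c) hs).
  by rewrite X0 mulmx0 add0r big1 // => r _; rewrite U0 mulmx0.
suff [h1 h2] : xiw w = 0 /\ (forall r, (r < L)%N -> etaw w r = 0) by apply: w_zero.
apply: (core_main hAB
  (C := ('I_(T0 - (L + n) + 1) + {i : 'I_pm & 'I_(T (rshift pb i) - (L + n) + 1)})%type)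
  (xw := fun c s => match c with
                    | inl c => Xc (c + s)%N
                    | inr c => x (rshift pb (tag c)) (tagged c + s)%N end)
  (uw := fun c t => match c with
                    | inl c => Uc (t + c)%N
                    | inr c => u (rshift pb (tag c)) (t + tagged c)%N end)
  (xi := xiw w) (eta := etaw w)).
- move=> [c|[i c]] s hs.
    exact: trc'.
  exact: (win_traj hL (hT _) (tr _) (ltn_ord c) hs).
- move=> [c|[i c]] s hs.
    exact: H1c.
  exact: (win_H1 hL (hT _) (hwm' i) (ltn_ord c) hs).
- move=> y hy; apply: (pe_free (pe al ha)).
  rewrite /Hhyb mul_mx_row Hcum_hankel Hmos_mul.
  rewrite (pe_hank (U := Uc)); last by move=> c hc; exact: (hy (inl (Ordinal hc))).
  have -> : \mxrow_i (al (rshift pb i) *: (vecr (L + n) y *m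
          hankel (L + n) (T (rshift pb i) - (L + n) + 1) (u (rshift pb i)))) = 0.
    apply/mxrowP => i; rewrite mxrowK submxrow0.
    rewrite (pe_hank (U := u (rshift pb i))) ?scaler0 // => c hc.
    exact: (hy (inr (existT _ i (Ordinal hc)))).
  by rewrite row_mx0.
Qed.

Theorem lemma1 (R : realType) (n m : nat) (A : 'M[R]_n) (B : 'M[R]_(n, m))
  (hAB : controllable A B) (L : nat) (hL : (1 <= L)%N) :
  (* 1) cumulative *)
  (forall (p T0 : nat) (u : 'I_p -> nat -> 'cV[R]_m) (x : 'I_p -> nat -> 'cV[R]_n),
     (forall i, is_traj A B T0 (u i) (x i)) ->
     (L + n <= T0)%N ->
     CCPE T0 u (L + n) ->
     forall alpha : 'I_p -> R, (forall i, alpha i != 0) ->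
       \rank (col_mx (Hcum 1 alpha (T0 - L + 1) x) (Hcum L alpha (T0 - L + 1) u))
         = (n + m * L)%N) /\
  (* 2) mosaic *)
  (forall (p : nat) (T : 'I_p -> nat) (u : 'I_p -> nat -> 'cV[R]_m)
          (x : 'I_p -> nat -> 'cV[R]_n),
     (forall i, is_traj A B (T i) (u i) (x i)) ->
     (forall i, L + n <= T i)%N ->
     MCPE T u (L + n) ->
     forall alpha : 'I_p -> R, (forall i, alpha i != 0) ->
       \rank (col_mx (Hmos 1 alpha (fun i => T i - L + 1)%N x) (Hmos L alpha (fun i => T i - L + 1)%N u))
         = (n + m * L)%N) /\
  (* 3) hybrid: indices lshift = cumulative part, rshift = mosaic part *)
  (forall (pb pm T0 : nat) (T : 'I_(pb + pm) -> nat)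
          (u : 'I_(pb + pm) -> nat -> 'cV[R]_m) (x : 'I_(pb + pm) -> nat -> 'cV[R]_n),
     (forall i, is_traj A B (T i) (u i) (x i)) ->
     (forall i : 'I_pb, T (lshift pm i) = T0) ->
     (forall i, L + n <= T i)%N ->
     HCPE T0 T u (L + n) ->
     forall alpha : 'I_(pb + pm) -> R, (forall i, alpha i != 0) ->
       \rank (col_mx (Hhyb 1 alpha (T0 - L + 1) (fun i => T i - L + 1)%N x)
                     (Hhyb L alpha (T0 - L + 1) (fun i => T i - L + 1)%N u))
         = (n + m * L)%N).
Proof.
split; first exact: part1.
split; first exact: part2.
exact: part3.
Qed.
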